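(* Let $A,B,C$ be compact convex sets in the plane with no common point, and let $A'\subset A$, $B'\subset B$, $C'\subset C$ be compact convex sets that are pairwise intersecting. Then $o(A'B'C')=o(ABC)$.
   Context: For three pairwise intersecting compact convex sets $X,Y,Z$ in the plane: $o(XYZ)=0$ if $X\cap Y\cap Z\neq\emptyset$; otherwise $o(XYZ)=o(xyz)$ for any $x\in Y\cap Z$, $y\in X\cap Z$, $z\in X\cap Y$, where for points $o(xyz)=+1$ for a counterclockwise and $-1$ for a clockwise triangle (this is known to be independent of the choice of $x,y,z$). *)

(* Defs.v *)
From mathcomp Require Import all_boot all_order all_algebra.
From mathcomp Require Import all_classical all_reals all_analysis.
Set Implicit Arguments. Unset Strict Implicit. Unset Printing Implicit Defensive.
Import Order.TTheory GRing.Theory Num.Theory numFieldNormedType.Exports.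
Local Open Scope classical_set_scope.
Local Open Scope ring_scope.

Section Defs.
Variable R : realType.
Definition point := (R * R)%type.

Definition det3 (x y z : point) : R :=
  (y.1 - x.1) * (z.2 - x.2) - (y.2 - x.2) * (z.1 - x.1).

(* o(xyz): +1 counterclockwise, -1 clockwise (0 if degenerate) *)
Definition orient_pts (x y z : point) : R := Num.sg (det3 x y z).

(* o(XYZ) for pairwise intersecting sets: 0 if common point, otherwise
   o(xyz) for (chosen) x in Y∩Z, y in X∩Z, z in X∩Y. *)
Definition orient_sets (X Y Z : set point) : R :=
  if `[< exists p, X p /\ Y p /\ Z p >] then 0
  else orient_pts (xget (0, 0) (Y `&` Z)) (xget (0, 0) (X `&` Z))
                  (xget (0, 0) (X `&` Y)).
End Defs.

(* Main.v *)
Require Import Defs.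
From mathcomp Require Import all_boot all_order all_algebra.
From mathcomp Require Import all_classical all_reals all_analysis.
From mathcomp Require Import ring lra.
Import Order.TTheory GRing.Theory Num.Theory numFieldNormedType.Exports.
Local Open Scope classical_set_scope.
Local Open Scope ring_scope.

Section S.
Variable R : realType.
Implicit Types x y z : (R * R)%type.
Lemma convP (A : set (R * R)%type) : convex_set A ->
  forall (t : R) x y, 0 <= t -> t <= 1 -> A x -> A y ->
  A (t * x.1 + (1 - t) * y.1, t * x.2 + (1 - t) * y.2).
Proof.
move=> cA t x y t0 t1 Ax Ay.
have := cA x y (Itv01 t0 t1).
rewrite !inE => /(_ Ax Ay).
by case: x {Ax} => ? ?; case: y {Ay} => ? ?.
Qed.

Lemma nondeg (A B C : set (R * R)%type) : convex_set A -> convex_set B -> convex_set C ->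
  ~ (exists p, A p /\ B p /\ C p) ->
  forall x y z, B x -> C x -> A y -> C y -> A z -> B z -> det3 x y z != 0.
Proof.
move=> cA cB cC nABC [x1 x2] [y1 y2] [z1 z2] Bx Cx Ay Cy Az Bz.
apply/negP => /eqP hd; apply: nABC.
rewrite /det3 /= in hd.
set s := (y1 - x1) ^+ 2 + (y2 - x2) ^+ 2.
set t := (y1 - x1) * (z1 - x1) + (y2 - x2) * (z2 - x2).
have h1 : s * (z1 - x1) = t * (y1 - x1).
  apply/eqP; rewrite -subr_eq0; apply/eqP.
  transitivity (- (y2 - x2) * ((y1 - x1) * (z2 - x2) - (y2 - x2) * (z1 - x1))).
    rewrite /s /t; ring.
  by rewrite hd mulr0.
have h2 : s * (z2 - x2) = t * (y2 - x2).
  apply/eqP; rewrite -subr_eq0; apply/eqP.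
  transitivity ((y1 - x1) * ((y1 - x1) * (z2 - x2) - (y2 - x2) * (z1 - x1))).
    rewrite /s /t; ring.
  by rewrite hd mulr0.
have s0 : 0 <= s by rewrite /s addr_ge0 // sqr_ge0.
have [s00|spos] := eqVneq s 0.
  move: s00; rewrite /s; move/eqP; rewrite paddr_eq0 ?sqr_ge0 // !sqrf_eq0 !subr_eq0.
  move=> /andP[/eqP e1 /eqP e2].
  exists (x1, x2); split => //; by rewrite -e1 -e2.
have sp : 0 < s by rewrite lt_neqAle eq_sym spos.
have [ts|st] := leP s t.
- (* y between x and z *)
  have tn0 : t != 0 by apply/eqP => t0; move: ts; rewrite t0; lra.
  set w := s / t.
  have w0 : 0 <= w by rewrite /w divr_ge0 //; lra.
  have w1 : w <= 1 by rewrite /w ler_pdivrMr; lra.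
  have e1 : y1 - x1 = w * (z1 - x1).
    by rewrite /w mulrAC h1 mulrAC divff // mul1r.
  have e2 : y2 - x2 = w * (z2 - x2).
    by rewrite /w mulrAC h2 mulrAC divff // mul1r.
  have := @convP B cB w _ _ w0 w1 Bz Bx => /=.
  have -> : w * z1 + (1 - w) * x1 = y1 by lra.
  have -> : w * z2 + (1 - w) * x2 = y2 by lra.
  by move=> By; exists (y1, y2).
have [t0|t0] := leP 0 t.
- (* z between x and y *)
  set w := t / s.
  have w0 : 0 <= w by rewrite /w divr_ge0 //; lra.
  have w1 : w <= 1 by rewrite /w ler_pdivrMr; lra.
  have e1 : z1 - x1 = w * (y1 - x1).
    by rewrite /w mulrAC -h1 mulrAC divff // mul1r.
  have e2 : z2 - x2 = w * (y2 - x2).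
    by rewrite /w mulrAC -h2 mulrAC divff // mul1r.
  have := @convP C cC w _ _ w0 w1 Cy Cx => /=.
  have -> : w * y1 + (1 - w) * x1 = z1 by lra.
  have -> : w * y2 + (1 - w) * x2 = z2 by lra.
  by move=> Cz; exists (z1, z2).
- (* x between y and z *)
  have d0 : 0 < s - t by lra.
  set w := s / (s - t).
  have w0 : 0 <= w by rewrite /w divr_ge0 //; lra.
  have w1 : w <= 1 by rewrite /w ler_pdivrMr //; lra.
  have dn0 : s - t != 0 by rewrite gt_eqF.
  have e1 : x1 = w * z1 + (1 - w) * y1.
    have ee : (s - t) * x1 = s * z1 - t * y1 by lra.
    apply: (mulfI dn0); rewrite ee /w; field; exact: dn0.
  have e2 : x2 = w * z2 + (1 - w) * y2.
    have ee : (s - t) * x2 = s * z2 - t * y2 by lra.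
    apply: (mulfI dn0); rewrite ee /w; field; exact: dn0.
  have := @convP A cA w _ _ w0 w1 Az Ay => /=.
  rewrite -e1 -e2 => Ax; by exists (x1, x2).
Qed.

Lemma move1 (P Q : set (R * R)%type) : convex_set P -> convex_set Q ->
  forall y z, (forall w, P w -> Q w -> det3 w y z != 0) ->
  forall x x', P x -> Q x -> P x' -> Q x' ->
  Num.sg (det3 x y z) = Num.sg (det3 x' y z).
Proof.
move=> cP cQ y z nd.
have key : forall x x', P x -> Q x -> P x' -> Q x' ->
    0 < det3 x y z -> det3 x' y z < 0 -> False.
  move=> x x' Px Qx Px' Qx' d0 d1.
  have ab : 0 < det3 x y z - det3 x' y z by lra.
  set w := det3 x y z / (det3 x y z - det3 x' y z).
  have w0 : 0 <= w by rewrite /w divr_ge0 //; lra.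
  have w1 : w <= 1 by rewrite /w ler_pdivrMr //; lra.
  move: (nd _ (@convP P cP w _ _ w0 w1 Px' Px) (@convP Q cQ w _ _ w0 w1 Qx' Qx)).
  move/eqP; apply.
  have -> : det3 (w * x'.1 + (1 - w) * x.1, w * x'.2 + (1 - w) * x.2) y z
      = (1 - w) * det3 x y z + w * det3 x' y z by rewrite /det3 /=; ring.
  rewrite /w; field; rewrite gt_eqF //.
move=> x x' Px Qx Px' Qx'.
move: (nd _ Px' Qx') (nd _ Px Qx).
rewrite !neq_lt => /orP[h1|h1] /orP[h0|h0].
- by rewrite !ltr0_sg.
- by exfalso; exact: (key x x').
- by exfalso; exact: (key x' x).
- by rewrite !gtr0_sg.
Qed.

Lemma det3C x y z : det3 x y z = det3 y z x.
Proof. rewrite /det3; ring. Qed.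

Lemma indep (A B C : set (R * R)%type) : convex_set A -> convex_set B -> convex_set C ->
  ~ (exists p, A p /\ B p /\ C p) ->
  forall x y z x' y' z', B x -> C x -> A y -> C y -> A z -> B z ->
  B x' -> C x' -> A y' -> C y' -> A z' -> B z' ->
  Num.sg (det3 x y z) = Num.sg (det3 x' y' z').
Proof.
move=> cA cB cC nABC x y z x' y' z' Bx Cx Ay Cy Az Bz Bx' Cx' Ay' Cy' Az' Bz'.
have nd := @nondeg A B C cA cB cC nABC.
rewrite (@move1 B C cB cC y z _ x x') //; last by move=> w Bw Cw; exact: nd.
rewrite det3C (@move1 A C cA cC z x' _ y y') //; last first.
  by move=> w Aw Cw; rewrite -det3C; exact: nd.
rewrite det3C (@move1 A B cA cB x' y' _ z z') //; last first.
  by move=> w Aw Bw; rewrite -det3C -det3C; exact: nd.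
by rewrite det3C.
Qed.
End S.

Theorem corollary1 (R : realType) (A B C A' B' C' : set (R * R)%type) :
  compact A -> compact B -> compact C ->
  convex_set A -> convex_set B -> convex_set C ->
  ~ (exists p, A p /\ B p /\ C p) ->
  compact A' -> compact B' -> compact C' ->
  convex_set A' -> convex_set B' -> convex_set C' ->
  A' `<=` A -> B' `<=` B -> C' `<=` C ->
  A' `&` B' !=set0 -> A' `&` C' !=set0 -> B' `&` C' !=set0 ->
  orient_sets A' B' C' = orient_sets A B C.
Proof.
move=> _ _ _ cA cB cC nABC _ _ _ cA' cB' cC' sA sB sC [p pAB] [q pAC] [r pBC].
have nA' : ~ (exists p, A' p /\ B' p /\ C' p).
  by move=> [u [? [? ?]]]; apply: nABC; exists u; split; [apply: sA|split; [apply: sB|apply: sC]].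
rewrite /orient_sets !asboolF // /orient_pts.
have [Bx' Cx'] := xgetI (0, 0) pBC.
have [Ay' Cy'] := xgetI (0, 0) pAC.
have [Az' Bz'] := xgetI (0, 0) pAB.
have pBC2 : (B `&` C) r by case: pBC => ? ?; split; [apply: sB|apply: sC].
have pAC2 : (A `&` C) q by case: pAC => ? ?; split; [apply: sA|apply: sC].
have pAB2 : (A `&` B) p by case: pAB => ? ?; split; [apply: sA|apply: sB].
have [Bx Cx] := xgetI (0, 0) pBC2.
have [Ay Cy] := xgetI (0, 0) pAC2.
have [Az Bz] := xgetI (0, 0) pAB2.
apply: (@indep R A B C cA cB cC nABC).
all: first [assumption | (apply: sA; assumption) | (apply: sB; assumption) | (apply: sC; assumption)].
Qed.
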